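(* Define $F(0)=1$, $F(1)=2$ and $F(n)=F(n-1)+F(n-2)$ for $n\ge 2$ (so $\sum_{n\ge0}F(n)q^n=\frac{1+q}{1-q-q^2}$). For a word $w=w_1\cdots w_n$ over $\{1,2,3\}$ let $s(w)=|\{i : 1\le i\le n-2,\ w_{i+2}-w_i=2\}|$. Then for every $n\ge 0$, the number of words $w\in\{1,2,3\}^{2n}$ with $s(w)=0$ is $F(2n)^2$, and the number of words $w\in\{1,2,3\}^{2n+1}$ with $s(w)=0$ is $F(2n)F(2n+2)$.
   Context: The condition $s(w)=0$ means $w$ avoids the place-difference-value pattern $(12,(\mathbb{P},\{2\},\mathbb{P}),\{(1,2,\{2\})\},(\mathbb{P},\mathbb{P}))$, i.e. there is no $i$ with $w_{i+2}=w_i+2$. *)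

(* Defs.v *)
From mathcomp Require Import all_boot.
Set Implicit Arguments. Unset Strict Implicit. Unset Printing Implicit Defensive.

Fixpoint F (n : nat) : nat :=
  match n with
  | 0 => 1
  | 1 => 2
  | (m.+1 as k).+1 => F k + F m
  end.

(* A word of length n over {1,2,3} is an n.-tuple of 'I_3;
   the element a : 'I_3 stands for the letter a+1. *)
Definition letter (a : 'I_3) : nat := (nat_of_ord a).+1.

(* s(w) = #{ i : 1 <= i <= n-2 | w_{i+2} - w_i = 2 }, written 0-based
   as i ranging over 0 <= i < n-2 with w`_(i+2) = w`_i + 2. *)
Definition s (n : nat) (w : n.-tuple 'I_3) : nat :=
  count (fun i => letter (nth ord0 w i.+2) == letter (nth ord0 w i) + 2)
        (iota 0 (n - 2)).

(* Main.v *)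
Require Import Defs.
From mathcomp Require Import all_boot all_algebra ring zify.

Definition bad (x z : 'I_3) := letter z == letter x + 2.
Fixpoint ok (t : seq 'I_3) : bool :=
  match t with
  | [::] => true
  | x :: t' => (match t' with _ :: z :: _ => ~~ bad x z | _ => true end) && ok t'
  end.

Definition sc (t : seq 'I_3) :=
  count (fun i => letter (nth ord0 t i.+2) == letter (nth ord0 t i) + 2)
        (iota 0 (size t - 2)).

Lemma sc_ok t : (sc t == 0) = ok t.
Proof.
elim: t => [|x t IH] //.
case: t IH => [|y [|z r]] IH; [by []|by []|].
rewrite /sc /= -/(ok [:: y, z & r]) -IH /sc /= !subn2 /=.
have -> : iota 1 (size r) = map (addn 1) (iota 0 (size r)) by rewrite -iotaDl.
rewrite count_map /= addn_eq0 /bad.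
congr (_ && _); first by case: (letter z == _).
Qed.

Definition o0 : 'I_3 := ord0.
Definition o1 : 'I_3 := @Ordinal 3 1 isT.
Definition o2 : 'I_3 := @Ordinal 3 2 isT.

Fixpoint words n : seq (seq 'I_3) :=
  match n with
  | 0 => [:: [::]]
  | n'.+1 => let ws := words n' in
      map (cons o0) ws ++ map (cons o1) ws ++ map (cons o2) ws
  end.

Lemma mem_map_cons (a x : 'I_3) w ws :
  (x :: w \in map (cons a) ws) = (x == a) && (w \in ws).
Proof.
case: (eqVneq x a) => [->|ne] /=.
  by rewrite mem_map // => u v [].
by apply/mapP => [[u _ [e _]]]; rewrite e eqxx in ne.
Qed.

Lemma mem_words n w : (w \in words n) = (size w == n).
Proof.
elim: n w => [|n IH] [|x w] //=.
- by rewrite !mem_cat; apply/negP => /orP [/mapP [] |/orP [] /mapP []].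
- by rewrite !mem_cat !mem_map_cons IH eqSS;
   case: x => [[|[|[|k]]] hk] //=; case: (size w == n).
Qed.

Lemma uniq_words n : uniq (words n).
Proof.
have inj a : injective (@cons 'I_3 a) by move=> u v [].
have H (a b : 'I_3) ws : b != a -> ~~ has (mem (map (cons a) ws)) (map (cons b) ws).
  move=> ne; rewrite has_map; apply/hasPn => w _ /=.
  by rewrite mem_map_cons (negbTE ne).
elim: n => [|n IH] //=.
rewrite !cat_uniq !map_inj_uniq // IH has_cat !H //.
by rewrite negb_or !H.
Qed.

Lemma card_words N (P : seq 'I_3 -> bool) :
  #|[set w : N.-tuple 'I_3 | P w]| = count P (words N).
Proof.
transitivity (count P (map val (enum {: N.-tuple 'I_3}))).
  rewrite count_map cardsE cardE {1}/enum_mem size_filter.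
  by rewrite -enumT; apply: eq_count.
apply/permP/uniq_perm.
- rewrite map_inj_uniq; [exact: enum_uniq | exact: val_inj].
- exact: uniq_words.
move=> w; rewrite mem_words; apply/mapP/eqP => [[t _ ->]|H]; first exact: size_tuple.
by exists (Tuple (introT eqP H)); rewrite ?mem_enum.
Qed.

Lemma count_words_S (p : seq 'I_3 -> bool) n :
  count p (words n.+1) = count (fun w => p (o0 :: w)) (words n)
    + count (fun w => p (o1 :: w)) (words n) + count (fun w => p (o2 :: w)) (words n).
Proof. by rewrite /= !count_cat !count_map addnA. Qed.

Lemma count_andl (b : bool) (q : seq 'I_3 -> bool) s :
  count (fun w => b && q w) s = b * count q s.
Proof. elim: s => [|a s IH] /=; first by rewrite muln0. by rewrite IH mulnDr; case: (b); case: (q a). Qed.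

Definition G n x y := count (fun w => ok [:: x, y & w]) (words n).

Fixpoint h k (x : 'I_3) : nat :=
  match k with
  | 0 => 1
  | k'.+1 => (~~ bad x o0) * h k' o0 + (~~ bad x o1) * h k' o1 + (~~ bad x o2) * h k' o2
  end.

Lemma G_S n x y : G n.+1 x y =
  (~~ bad x o0) * G n y o0 + (~~ bad x o1) * G n y o1 + (~~ bad x o2) * G n y o2.
Proof.
have E z : count (fun w => ok [:: x, y, z & w]) (words n) = (~~ bad x z) * G n y z.
  by rewrite /G -count_andl.
by rewrite /G count_words_S !E.
Qed.

Lemma G_closed n x y : G n x y = h (uphalf n) x * h n./2 y.
Proof.
elim: n x y => [|n IH] x y; first by [].
rewrite G_S !IH /=.
ring.
Qed.

Lemma FSS m : F m.+2 = F m.+1 + F m. Proof. by []. Qed.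
Lemma hS0 k : h k.+1 o0 = h k o0 + h k o1. Proof. by rewrite /= !mul1n addn0. Qed.
Lemma hS1 k : h k.+1 o1 = h k o0 + h k o1 + h k o2. Proof. by rewrite /= !mul1n. Qed.
Lemma hS2 k : h k.+1 o2 = h k o0 + h k o1 + h k o2. Proof. by rewrite /= !mul1n. Qed.

Lemma h_F k : h k o1 = F (2 * k) /\ h k o2 = F (2 * k) /\ h k o0 + F (2 * k) = F (2 * k).+1.
Proof.
elim: k => [|k [H1 [H2 H0]]]; first by [].
have E : 2 * k.+1 = (2 * k).+2 by rewrite mulnS add2n.
rewrite E hS0 hS1 hS2 !FSS H1 H2 -H0.
lia.
Qed.

Lemma T_F k : h k o0 + h k o1 + h k o2 = F (2 * k.+1).
Proof.
have [H1 [H2 H0]] := h_F k.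
rewrite mulnS add2n FSS H1 H2 -H0; lia.
Qed.

Lemma count_SS n : count ok (words n.+2) =
  F (2 * (uphalf n).+1) * F (2 * (n./2).+1).
Proof.
rewrite -!T_F count_words_S !count_words_S.
rewrite -!/(G n _ _) !G_closed.
rewrite !mulnDl !mulnDr.
by rewrite !addnA.
Qed.

Theorem mainTheorem5 (n : nat) :
  #|[set w : (2 * n).-tuple 'I_3 | s w == 0]| = F (2 * n) ^ 2
  /\ #|[set w : (2 * n).+1.-tuple 'I_3 | s w == 0]| = F (2 * n) * F (2 * n + 2).
Proof.
have Hs N : #|[set w : N.-tuple 'I_3 | s w == 0]| = count ok (words N).
  rewrite -card_words; apply: eq_card => w; rewrite !inE -sc_ok /sc /s size_tuple //.
rewrite !Hs; case: n => [|m]; first by [].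
have E : 2 * m.+1 = (2 * m).+2 by rewrite mulnS add2n.
rewrite E !count_SS.
have U : uphalf (2 * m) = m by rewrite mul2n uphalf_double.
have D : (2 * m)./2 = m by rewrite mul2n doubleK.
have E2 : 2 * m.+2 = (2 * m).+2 + 2 by rewrite !mulnS addnC addnA.
have upS x : uphalf x.+1 = (x./2).+1 by [].
have hfS x : x.+1./2 = uphalf x by [].
rewrite upS hfS U D E E2; split; first by rewrite expnS expn1.
by rewrite mulnC.
Qed.
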